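(* Let $\Omega$ be a compact metric space, $\varphi:\Omega\to\Omega$ continuous, and let $\mathcal{V}=\{V_n\}\subset\mathcal{L}(X^* )$ be an ergodic operator sequence converging in the $\mathrm{W^*O}$-topology to an operator $Q$. Then for every $\varphi$-ergodic Borel probability measure $\mu$ on $\Omega$ the set $\Omega_{\mu,\mathcal{V}}=\{\omega\in\Omega:Q\delta_\omega=\mu\}$ is a Borel set with $\mu(\Omega_{\mu,\mathcal{V}})=1$.
   Context: $X=C(\Omega)$, $X^*$ the space of Radon measures, pairing $(x,\mu)$; $Ux=x\circ\varphi$, $V=U^*$. $\mathrm{W^*O}$-convergence $T_n\to T$ means $(x,T_n\mu)\to(x,T\mu)$ for all $x\in X,\mu\in X^*$. A sequence $\{V_n\}\subseteq\operatorname{co}\{V^k:k\in\mathbb{N}_0\}$ is ergodic if $(x,(\operatorname{Id}-V)V_n\mu)\to0$ for all $x\in X,\mu\in X^*$. $\delta_\omega$ is the Dirac measure at $\omega$; thus $Q\delta_\omega$ is the weak-star limit of $V_n\delta_\omega$. *)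

(* Defs.v *)
From HB Require Import structures.
From mathcomp Require Import all_boot all_order all_algebra.
From mathcomp Require Import all_classical all_reals all_analysis.
Set Implicit Arguments. Unset Strict Implicit. Unset Printing Implicit Defensive.
Import Order.TTheory GRing.Theory Num.Theory.
Import numFieldNormedType.Exports.
Local Open Scope classical_set_scope.
Local Open Scope ring_scope.

Section Defs.
Context {R : realType} {T : ptopologicalType}.

(** X = C(Omega) (real-valued): functions T -> R that are continuous.
    Elements of X^* are represented as maps (T -> R) -> R whose restriction
    to C(Omega) is linear and bounded; only their values on C(Omega) matter. *)
Definition functional := (T -> R) -> R.

Definition in_Xstar (F : functional) : Prop :=
  (forall (a : R) (f g : T -> R), continuous f -> continuous g ->
      F (fun t => a * f t + g t) = a * F f + F g) /\
  (exists M : R, forall f : T -> R, continuous f ->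
      (forall t, `|f t| <= 1) -> `|F f| <= M).

Definition Xstar_eq (F G : functional) : Prop :=
  forall x : T -> R, continuous x -> F x = G x.

Definition delta_fun (w : T) : functional := fun x => x w.

(** V = U^*, where U x = x \o phi: (x, V mu) = (x \o phi, mu). *)
Definition Vop (phi : T -> T) (mu : functional) : functional :=
  fun x => mu (x \o phi).

Definition convVpow (phi : T -> T) (c : seq R) (mu : functional) : functional :=
  fun x => \sum_(k < size c) c`_k * mu (x \o iter k phi).

Definition convex_coeffs (c : seq R) : Prop :=
  all (fun a => 0 <= a) c /\ \sum_(k < size c) c`_k = 1.
End Defs.

Notation borel T := (g_sigma_algebraType (@open T)).

Definition ergodic_measure {R : realType} {T : ptopologicalType}
  (phi : T -> T) (mu : probability (borel T) R) : Prop :=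
  (forall A : set (borel T), measurable A -> mu (phi @^-1` A) = mu A) /\
  (forall A : set (borel T), measurable A -> phi @^-1` A = A ->
      mu A = 0%E \/ mu A = 1%E).

(* Main.v *)
Require Import Defs.
From HB Require Import structures.
From mathcomp Require Import all_boot all_order all_algebra.
From mathcomp Require Import all_classical all_reals all_analysis.
From mathcomp Require Import measurable_realfun.
From mathcomp Require Import lra.
Import Order.TTheory GRing.Theory Num.Theory.
Import numFieldNormedType.Exports.
Local Open Scope classical_set_scope.
Local Open Scope ring_scope.
Section Dist.
Context {R : realType} {T : pseudoPMetricType R}.

Definition dd (a t : T) : R :=
  match edist (a, t) with | r%:E => (if r <= 1 then r else 1) | _ => 1 end.

Lemma dd_ge0 a t : 0 <= dd a t.
Proof.
rewrite /dd; have := edist_ge0 (a, t); case: (edist (a,t)) => // r.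
by rewrite lee_fin => r0; case: ifP.
Qed.

Lemma dd_le1 a t : dd a t <= 1.
Proof. by rewrite /dd; case: (edist (a,t)) => // r; case: ifP => // /negbT; rewrite -ltNge => /ltW. Qed.

Lemma dd_sym a t : dd a t = dd t a.
Proof. by rewrite /dd edist_sym. Qed.

Lemma dd_ball a t r : 0 < r -> ball a r t -> dd a t <= r.
Proof.
move=> r0 b; have := @edist_fin _ _ _ (a, t) r0 b; rewrite /dd /=.
have := edist_ge0 (a,t).
case: (edist (a,t)) => [s||] // _.
by rewrite lee_fin => sr; case: ifP => // /negbT; rewrite -ltNge => h; lra.
Qed.

Lemma dd_lt a t r : r <= 1 -> dd a t < r -> ball a r t.
Proof.
move=> r1; rewrite /dd => h; apply: (@edist_lt_ball _ _ _ (a, t)).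
move: h; case: (edist (a,t)) => [s||].
- by rewrite lte_fin; case: ifP => // _ h; lra.
- by move=> h; exfalso; lra.
- by move=> _; rewrite ltNye.
Qed.

Lemma dd_tri a t s : dd a s <= dd a t + dd t s.
Proof.
have := edist_triangle a t s.
have := dd_ge0 a t; have := dd_ge0 t s; have := dd_le1 a s.
rewrite /dd.
have := edist_ge0 (a, t); have := edist_ge0 (t, s); have := edist_ge0 (a, s).
case: (edist (a,s)) => [r3| |] //; case: (edist (a,t)) => [r1| |] //;
  case: (edist (t,s)) => [r2| |] //=; rewrite ?lee_fin.
all: by intros; repeat case: ifP => ?; try lra.
Qed.

Lemma dd_refl a : dd a a = 0.
Proof. by rewrite /dd edist_refl; case: ifP => //; rewrite ler01. Qed.

Lemma dd_cont a : continuous (dd a).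
Proof.
move=> t; apply/cvgrPdist_le => e e0.
near=> s.
have bs : ball t e s by near: s; exact: nbhsx_ballx.
have h1 := dd_tri a t s; have h2 := dd_tri a s t.
have h3 := dd_ball t s e e0 bs; rewrite dd_sym in h3.
have h4 := dd_ball t s e e0 bs.
rewrite ler_norml; apply/andP; split; lra.
Unshelve. all: by end_near. Qed.

End Dist.
Section Cont.
Context {R : realType} {T : pseudoPMetricType R}.
Implicit Types f g : T -> R.

Lemma contD f g : continuous f -> continuous g -> continuous (fun s => f s + g s).
Proof. by move=> cf cg t; apply: cvgD; [exact: cf|exact: cg]. Qed.
Lemma contM f g : continuous f -> continuous g -> continuous (fun s => f s * g s).
Proof. by move=> cf cg t; apply: cvgM; [exact: cf|exact: cg]. Qed.
Lemma contN f : continuous f -> continuous (fun s => - f s).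
Proof. by move=> cf t; apply: cvgN; exact: cf. Qed.
Lemma contC (a : R) : continuous (fun _ : T => a).
Proof. by move=> t; exact: cvg_cst. Qed.
Lemma contV f : (forall s, f s != 0) -> continuous f -> continuous (fun s => (f s)^-1).
Proof. by move=> f0 cf t; apply: cvgV; [exact: f0|exact: cf]. Qed.
Lemma contA f : continuous f -> continuous (fun s => `|f s|).
Proof. by move=> cf t; apply: cvg_norm; exact: cf. Qed.
Lemma cont_sum (A : Type) (S : seq A) (F : A -> T -> R) :
  (forall a, continuous (F a)) -> continuous (fun s => \sum_(a <- S) F a s).
Proof.
move=> cF; elim: S => [|a S IH].
  by under eq_fun do rewrite big_nil; exact: contC.
by under eq_fun do rewrite big_cons; exact: contD.
Qed.

Hypothesis hTc : compact [set: T].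

Lemma fin_cover (U : T -> set T) : (forall t, open (U t)) -> (forall t, U t t) ->
  exists L : seq T, forall s, exists2 t, t \in L & U t s.
Proof.
move=> oU Ut; move: hTc; rewrite compact_cover => /(_ T [set: T] U).
case.
- by move=> t _; exact: oU.
- by move=> s _; exists s.
move=> D' _ cov; exists (finmap.enum_fset D') => s.
by case: (cov s I) => t /= tD Uts; exists t.
Qed.
End Cont.
Section Approx.
Context {R : realType} {T : pseudoPMetricType R}.
Hypothesis hTc : compact [set: T].

Definition rn (n : nat) : R := (n.+1%:R)^-1.
Lemma rn_gt0 n : 0 < rn n. Proof. by rewrite /rn invr_gt0 ltr0n. Qed.
Lemma rn_le1 n : rn n <= 1.
Proof. by rewrite /rn invf_le1 ?ltr0n // ler1n. Qed.

Lemma open_ddlt (a : T) (r : R) : open [set s | dd a s < r].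
Proof.
have := (continuousP (dd a)).1 (@dd_cont R T a) [set y | y < r].
by apply; exact: open_lt.
Qed.

Lemma net_ex n : exists L : seq T, forall s, exists2 t, t \in L & dd t s < rn n.
Proof.
apply: (@fin_cover R T hTc (fun t => [set s | dd t s < rn n])).
- by move=> t; exact: open_ddlt.
- by move=> t /=; rewrite dd_refl rn_gt0.
Qed.

Definition Fn n : seq T := projT1 (cid (net_ex n)).
Definition bb (p : nat * nat) : T := nth point (Fn p.1) p.2.

Lemma bb_near n t : exists k, dd (bb (n, k)) t < rn n.
Proof.
have [t0 t0in h] := projT2 (cid (net_ex n)) t.
by exists (index t0 (Fn n)); rewrite /bb /= nth_index.
Qed.

Definition psi (p : nat * nat) (s : T) : R :=
  ((2 * rn p.1 - dd (bb p) s) + `|2 * rn p.1 - dd (bb p) s|) / 2.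

Lemma psi_ge0 p s : 0 <= psi p s.
Proof.
rewrite /psi divr_ge0 //; set v := (2 * rn p.1 - dd (bb p) s).
have := ler_norm (- v); rewrite normrN; lra.
Qed.

Lemma psi_gt0 p s : dd (bb p) s < 2 * rn p.1 -> 0 < psi p s.
Proof.
move=> h; rewrite /psi divr_gt0 //; set v := (2 * rn p.1 - dd (bb p) s).
have v0 : 0 < v by rewrite /v subr_gt0.
rewrite gtr0_norm //; lra.
Qed.

Lemma psi_eq0 p s : ~ (dd (bb p) s < 2 * rn p.1) -> psi p s = 0.
Proof.
move=> /negP; rewrite -leNgt => h; rewrite /psi.
set v := (2 * rn p.1 - dd (bb p) s).
have v0 : v <= 0 by rewrite /v subr_le0.
by rewrite ler0_norm // addrN mul0r.
Qed.

Lemma psi_cont p : continuous (psi p).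
Proof.
rewrite /psi; apply: contM; last exact: contC.
apply: contD; last apply: contA; apply: contD; (try exact: contC);
  apply: contN; exact: dd_cont.
Qed.

Definition yy (i : seq ((nat * nat) * rat)) (s : T) : R :=
  (\sum_(p <- i) ratr p.2 * psi p.1 s) * (\sum_(p <- i) psi p.1 s)^-1.

Lemma sum_mem_ge (A : eqType) (L : seq A) (F : A -> R) a :
  a \in L -> (forall b, 0 <= F b) -> F a <= \sum_(b <- L) F b.
Proof.
move=> aL F0; elim: L aL => [//|b L IH]; rewrite in_cons big_cons => /orP[/eqP->|/IH h].
  by rewrite lerDl sumr_ge0.
by apply: le_trans h _; rewrite lerDr.
Qed.


Lemma approx_cont (x : T -> R) : continuous x -> forall e, 0 < e ->
  exists i, continuous (yy i) /\ forall s, `|x s - yy i s| <= e.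
Proof.
move=> cx e e0; set eps := e / 3.
have eps0 : 0 < eps by rewrite /eps divr_gt0.
have H t : exists p : nat * nat, dd (bb p) t < 2 * rn p.1 /\
    (forall s, dd (bb p) s < 2 * rn p.1 -> `|x t - x s| < eps).
  have := cx t; move/cvgrPdist_lt => /(_ eps eps0) /nbhs_ballP [rho rho0 hb].
  set r1 := if rho <= 1 then rho else 1.
  have r10 : 0 < r1 by rewrite /r1; case: ifP.
  have r11 : r1 <= 1 by rewrite /r1; case: ifP => // /negbT; rewrite -ltNge => /ltW.
  have r1r : r1 <= rho by rewrite /r1; case: ifP => // /negbT; rewrite -ltNge => /ltW.
  have [n hn] := @ltr_add_invr R 0 (r1 / 3) ltac:(by rewrite divr_gt0).
  rewrite add0r in hn.
  have [k hk] := bb_near n t.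
  exists (n, k); split => /=.
    have := rn_gt0 n; lra.
  move=> s hs; apply: hb.
  apply: (le_ball r1r); apply: dd_lt => //.
  have h := dd_tri t (bb (n, k)) s.
  have e1 := dd_sym s t; have e2 := dd_sym t (bb (n,k)).
  move: hn; rewrite -/(rn n) => hn; lra.
pose P t := proj1_sig (cid (H t)).
have PP t := proj2_sig (cid (H t)).
have [L hL] := @fin_cover R T hTc (fun t => [set s | dd (bb (P t)) s < 2 * rn (P t).1])
  (fun t => open_ddlt _ _) (fun t => (PP t).1).
have Hq t : exists q : rat, `|ratr q - x (bb (P t))| < eps.
  have [q] := @rat_in_itvoo R (x (bb (P t)) - eps) (x (bb (P t)) + eps) ltac:(lra).
  by rewrite in_itv /= => /andP[h1 h2]; exists q; rewrite ltr_norml; apply/andP; split; lra.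
pose Qr t := proj1_sig (cid (Hq t)).
have HQ t := proj2_sig (cid (Hq t)).
exists [seq (P t, Qr t) | t <- L].
have den0 s : 0 < \sum_(p <- [seq (P t, Qr t) | t <- L]) psi p.1 s.
  rewrite big_map; have [t tL hts] := hL s.
  apply: (lt_le_trans (psi_gt0 (P t) s hts)).
  by apply: (@sum_mem_ge _ L (fun t => psi (P t) s)) => // b; exact: psi_ge0.
split.
  apply: contM; first by apply: cont_sum => p; apply: contM; [exact: contC|exact: psi_cont].
  apply: contV; first by move=> s; rewrite gt_eqF.
  by apply: cont_sum => p; exact: psi_cont.
move=> s; rewrite /yy !big_map.
set D := \sum_(t <- L) psi (P t) s.
have D0 : 0 < D by move: (den0 s); rewrite big_map.
have -> : x s - (\sum_(t <- L) ratr (Qr t) * psi (P t) s) * D^-1 =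
   (\sum_(t <- L) psi (P t) s * (x s - ratr (Qr t))) / D.
  have E : \sum_(t <- L) psi (P t) s * (x s - ratr (Qr t)) =
      x s * D - \sum_(t <- L) ratr (Qr t) * psi (P t) s.
    rewrite /D mulr_sumr -sumrB; apply: eq_bigr => t _.
    by rewrite mulrBr mulrC (mulrC (ratr _)).
  by rewrite E mulrBl mulfK ?gt_eqF.
rewrite normrM normfV (gtr0_norm D0) ler_pdivrMr //.
apply: le_trans (ler_norm_sum _ _ _) _.
rewrite /D mulr_sumr; apply: ler_sum => t _.
rewrite normrM (ger0_norm (psi_ge0 _ _)) mulrC.
have [hd|hd] := pselect (dd (bb (P t)) s < 2 * rn (P t).1); last first.
  by rewrite psi_eq0 // ?mul0r ?mulr0.
apply: ler_pM => //; first exact: psi_ge0.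
have h1 := (PP t).2 s hd.
have h2 := (PP t).2 (bb (P t)) ltac:(rewrite dd_refl; have := rn_gt0 (P t).1; lra).
have h3 := HQ t.
move: h1 h2 h3; rewrite !ltr_norml => /andP[a1 a2] /andP[b1 b2] /andP[c1 c2].
rewrite ler_norml; apply/andP; split; rewrite /eps in a1 a2 b1 b2 c1 c2; lra.
Qed.

End Approx.
Section Meas.
Context {R : realType} {T : pseudoPMetricType R}.
Hypothesis hTc : compact [set: T].

Lemma cont_meas (f : T -> R) : continuous f -> measurable_fun [set: borel T] (f : borel T -> R).
Proof.
move=> cf; apply: (measurability _ (RGenOpens.measurableE R)).
move=> _ [_ [a [b ->] <-]]; rewrite setTI.
apply: sub_sigma_algebra.
by move/continuousP : cf; apply; exact: interval_open.
Qed.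

Lemma cont_meas2 (f : T -> T) : continuous f -> measurable_fun [set: borel T] (f : borel T -> borel T).
Proof.
move=> cf; apply: (@measurability _ _ (borel T) (borel T) _ _ open).
  by [].
move=> _ [B oB <-]; rewrite setTI.
apply: sub_sigma_algebra.
by move/continuousP : cf; apply.
Qed.

Lemma cont_bounded (f : T -> R) : continuous f -> exists M, forall t, `|f t| <= M.
Proof.
move=> cf.
have : compact (f @` [set: T]).
  by apply: continuous_compact => //; apply: continuous_subspaceT.
move/compact_bounded => [M0 [_ HM]]; exists (M0 + 1) => t.
by apply: (HM (M0 + 1)); [rewrite ltrDl ltr01|exists t].
Qed.

Lemma cont_integrable (mu : probability (borel T) R) (f : T -> R) : continuous f ->
  mu.-integrable [set: borel T] (EFin \o (f : borel T -> R)).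
Proof.
move=> cf; apply: measurable_bounded_integrable => //.
- apply: (@le_lt_trans _ _ 1%E); last exact: ltry.
  exact: probability_le1.
- exact: cont_meas.
- have [M HM] := cont_bounded _ cf; exists M; split; first exact: num_real.
  by move=> y My t _; apply: le_trans (HM t) (ltW My).
Qed.

End Meas.
Section Main.
Context {R : realType} {T : pseudoPMetricType R}.
Hypothesis hTc : compact [set: T].
Variable phi : T -> T.
Hypothesis hphi : continuous phi.
Variable c : nat -> seq R.
Hypothesis hc : forall n, convex_coeffs (c n).
Variable Q : @functional R T -> @functional R T.
Hypothesis hQ : forall mu (x : T -> R), in_Xstar mu -> continuous x ->
     (fun n => convVpow phi (c n) mu x) @ \oo --> Q mu x.
Hypothesis herg : forall mu (x : T -> R), in_Xstar mu -> continuous x ->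
     (fun n => convVpow phi (c n) mu x - Vop phi (convVpow phi (c n) mu) x)
       @ \oo --> 0.
Variable mu : probability (borel T) R.
Hypothesis hmu : ergodic_measure phi mu.

Definition sn (x : T -> R) n (w : T) : R :=
  \sum_(k < size (c n)) (c n)`_k * x (iter k phi w).
Definition gg (x : T -> R) (w : T) : R := Q (delta_fun w) x.

Lemma delta_X (w : T) : in_Xstar (R:=R) (delta_fun w).
Proof.
split; first by move=> a f g _ _.
by exists 1 => f _ /(_ w).
Qed.

Lemma sn_cvg x w : continuous x -> (fun n => sn x n w) @ \oo --> gg x w.
Proof. move=> cx; have h := hQ _ _ (delta_X w) cx. exact h. Qed.

Lemma c_ge0 n (k : 'I_(size (c n))) : 0 <= (c n)`_k.
Proof. have [/allP h _] := hc n; exact: (h _ (mem_nth 0 (ltn_ord k))). Qed.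

Lemma c_sum n : \sum_(k < size (c n)) (c n)`_k = 1.
Proof. by have [_ ->] := hc n. Qed.

Lemma conv_bound n w (f : T -> R) e : (forall t, `|f t| <= e) ->
  `|\sum_(k < size (c n)) (c n)`_k * f (iter k phi w)| <= e.
Proof.
move=> hf; apply: le_trans (ler_norm_sum _ _ _) _.
apply: (@le_trans _ _ (\sum_(k < size (c n)) (c n)`_k * e)).
  apply: ler_sum => k _; rewrite normrM ger0_norm ?c_ge0 //.
  by apply: ler_wpM2l; [exact: c_ge0|exact: hf].
by rewrite -mulr_suml c_sum mul1r.
Qed.

Lemma gg_close x y e w : continuous x -> continuous y ->
  (forall t, `|x t - y t| <= e) -> `|gg x w - gg y w| <= e.
Proof.
move=> cx cy hxy.
have h : (fun n => `|sn x n w - sn y n w|) @ \oo --> `|gg x w - gg y w|.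
  by apply: cvg_norm; apply: cvgB; exact: sn_cvg.
rewrite -(cvg_lim _ h) //; apply: limr_le; first by apply/cvg_ex; eexists; exact: h.
near=> n; rewrite /sn -sumrB.
under eq_bigr do rewrite -mulrBr.
exact: (conv_bound n w (fun t => x t - y t)).
Unshelve. all: by end_near. Qed.

Lemma gg_bound x e w : continuous x -> (forall t, `|x t| <= e) -> `|gg x w| <= e.
Proof.
move=> cx hx.
have h : (fun n => `|sn x n w|) @ \oo --> `|gg x w|.
  by apply: cvg_norm; exact: sn_cvg.
rewrite -(cvg_lim _ h) //; apply: limr_le; first by apply/cvg_ex; eexists; exact: h.
near=> n; exact: (conv_bound n w x).
Unshelve. all: by end_near. Qed.

Lemma iter_cont k : continuous (iter k phi).
Proof.
elim: k => [|k IH] t /=; first exact: cvg_id.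
exact: (continuous_comp (IH t) (hphi _)).
Qed.

Lemma comp_iter_cont (x : T -> R) k : continuous x -> continuous (fun w => x (iter k phi w)).
Proof. move=> cx t; exact: (continuous_comp (iter_cont k t) (cx _)). Qed.

Lemma sn_cont x n : continuous x -> continuous (sn x n).
Proof.
move=> cx; rewrite /sn; apply: cont_sum => k; apply: contM; first exact: contC.
exact: comp_iter_cont.
Qed.

Lemma gg_meas x : continuous x -> measurable_fun [set: borel T] (gg x : borel T -> R).
Proof.
move=> cx; apply: (@measurable_fun_cvg _ (borel T) R [set: borel T] (fun n => sn x n)).
- by move=> n; exact: (cont_meas _ (sn_cont _ n cx)).
- by move=> w _; exact: sn_cvg.
Qed.

Lemma gg_inv x w : continuous x -> gg x (phi w) = gg x w.
Proof.
move=> cx; have h1 := herg _ _ (delta_X w) cx.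
have E n : Vop phi (convVpow phi (c n) (delta_fun w)) x = sn x n (phi w).
  by rewrite /Vop /convVpow /sn; apply: eq_bigr => k _; rewrite /delta_fun /= -iterSr.
have h2 : (fun n => sn x n (phi w)) @ \oo --> gg x w - 0.
  have -> : (fun n => sn x n (phi w)) =
     (fun n => sn x n w - (convVpow phi (c n) (delta_fun w) x -
        Vop phi (convVpow phi (c n) (delta_fun w)) x)).
    by apply: funext => n; rewrite E /convVpow /sn /delta_fun /= opprB addrC subrK.
  by apply: cvgB; [exact: sn_cvg|exact: h1].
rewrite subr0 in h2.
exact: (cvg_unique _ (sn_cvg x (phi w) cx) h2).
Qed.


Local Open Scope ereal_scope.
Lemma int_phi (f : T -> R) : continuous f ->
  \int[mu]_w (f (phi w))%:E = \int[mu]_w (f w)%:E.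
Proof.
move=> cf.
have cfp : continuous (fun w => f (phi w)).
  by move=> t; exact: (continuous_comp (hphi t) (cf _)).
have := @integral_pushforward _ _ (borel T) (borel T) R phi (cont_meas2 _ hphi) mu setT
  (EFin \o f) (measurable_int _ (cont_integrable hTc mu _ cf)) (cont_integrable hTc mu _ cfp)
  measurableT.
move=> h.
transitivity (\int[pushforward mu (phi : borel T -> borel T)]_w (f w)%:E); first by rewrite h.
apply: eq_measure_integral; first exact: (cont_meas2 _ hphi).
move=> mphi A mA _.
by have := (proj1 hmu) A mA.
Qed.

Lemma int_iter (f : T -> R) k : continuous f ->
  \int[mu]_w (f (iter k phi w))%:E = \int[mu]_w (f w)%:E.
Proof.
move=> cf; elim: k => [//|k IH].
rewrite -IH.
transitivity (\int[mu]_w ((fun t => f (iter k phi t)) (phi w))%:E).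
  by apply: eq_integral => w _; rewrite iterSr.
exact: (int_phi _ (comp_iter_cont _ k cf)).
Qed.

Lemma int_sn x n : continuous x -> \int[mu]_w (sn x n w)%:E = \int[mu]_w (x w)%:E.
Proof.
move=> cx.
have fin : \int[mu]_w (x w)%:E \is a fin_num.
  by apply: integrable_fin_num => //; exact: (cont_integrable hTc mu _ cx).
rewrite /sn.
under eq_integral do rewrite -sumEFin.
rewrite integral_sum //; last first.
  move=> k.
  have cc : continuous (fun w => ((c n)`_k * x (iter k phi w))%R).
    by apply: contM; [exact: contC | exact: comp_iter_cont].
  exact: (cont_integrable hTc mu _ cc).
transitivity (\sum_(k < size (c n)) ((c n)`_k)%:E * \int[mu]_w (x w)%:E).
  apply: eq_bigr => k _.
  under eq_integral do rewrite EFinM.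
  rewrite integralZl //; first by rewrite int_iter.
  exact: (cont_integrable hTc mu _ (comp_iter_cont _ k cx)).
rewrite -(fineK fin); under eq_bigr do rewrite -EFinM.
by rewrite sumEFin -mulr_suml c_sum mul1r.
Qed.


Lemma int_gg x : continuous x -> \int[mu]_w (gg x w)%:E = \int[mu]_w (x w)%:E.
Proof.
move=> cx; have [M HM] := cont_bounded hTc _ cx.
have ig : mu.-integrable [set: borel T] (fun _ => M%:E).
  exact: (cont_integrable hTc mu (fun _ => M) (contC M)).
have := @dominated_convergence _ (borel T) R mu setT measurableT
  (fun n w => (sn x n w)%:E) (fun w => (gg x w)%:E) (fun _ => M%:E).
case.
- by move=> n; apply/measurable_EFinP; exact: (cont_meas _ (sn_cont _ n cx)).
- by apply/measurable_EFinP; exact: gg_meas.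
- apply: aeW => w _; apply: cvg_EFin; first exact: nearW.
  exact: (sn_cvg x w cx).
- exact: ig.
- by apply: aeW => w n _ /=; rewrite lee_fin; exact: (conv_bound n w x).
move=> _ _ h.
have h' : (fun n => \int[mu]_w (sn x n w)%:E) = fun _ => \int[mu]_w (x w)%:E.
  by apply: funext => n; exact: int_sn.
move: h; rewrite h' => h.
exact: (cvg_unique _ h (cvg_cst _)).
Qed.


Lemma bnd_integrable (f : borel T -> R) M : measurable_fun setT f ->
  (forall w, (`|f w| <= M)%R) -> mu.-integrable [set: borel T] (EFin \o f).
Proof.
move=> mf hf; apply: measurable_bounded_integrable => //.
- apply: (@le_lt_trans _ _ 1%E); last exact: ltry.
  exact: probability_le1.
- exists M; split; first exact: num_real.
  by move=> y My t _; apply: le_trans (hf t) (ltW My).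
Qed.

Lemma preim_meas (f : borel T -> R) (B : set R) : measurable_fun setT f ->
  measurable B -> measurable (f @^-1` B).
Proof. by move=> mf mB; have := mf measurableT B mB; rewrite setTI. Qed.

Lemma ae0 (f : borel T -> R) M : measurable_fun setT f -> (forall w, (`|f w| <= M)%R) ->
  \int[mu]_w (f w)%:E = 0 -> mu [set w | (f w < 0)%R] = 0 -> mu [set w | f w != 0%R] = 0.
Proof.
move=> mf hf i0 neg0.
have mN : measurable [set w : borel T | (f w < 0)%R].
  have := preim_meas f `]-oo, 0%R[%classic mf (measurable_itv _).
  by congr measurable; apply: funext => w /=.
have mfE : measurable_fun setT (EFin \o f) by exact/measurable_EFinP.
have h1 : \int[mu]_w `|(f w)%:E| = 0.
  rewrite -i0; apply: ae_eq_integral => //.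
    by apply: measurableT_comp => //; exact: abse_measurable.
  exists [set w | (f w < 0)%R]; split => //.
  move=> w /= /not_implyP [_ h]; rewrite ltNge; apply/negP => fw0; apply: h.
  by rewrite /= ger0_norm.
have [N [mN0 muN sub]] := (ae_eq_integral_abs mu measurableT mfE).1 h1.
apply: (subset_measure0 _ mN0 _ muN).
- have := preim_meas f (~` [set 0%R]) mf (measurableC (measurable_set1 _)).
  congr measurable; apply: funext => w /=.
  by apply/propext; split; move/eqP.
- move=> w /= fw; apply: sub => /= /(_ I) /= [] /eqP.
  by rewrite (negbTE fw).
Qed.


Lemma int_fin x : continuous x -> \int[mu]_w (x w)%:E \is a fin_num.
Proof.
by move=> cx; apply: integrable_fin_num => //; exact: (cont_integrable hTc mu _ cx).
Qed.

Lemma ae_const x : continuous x ->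
  mu [set w | gg x w != fine (\int[mu]_w (x w)%:E)] = 0.
Proof.
move=> cx.
set m := fine (\int[mu]_w (x w)%:E).
have Ig : \int[mu]_w (gg x w)%:E = m%:E by rewrite int_gg // fineK // int_fin.
have [M HM] := cont_bounded hTc _ cx.
have hg w : (`|gg x w| <= M)%R := gg_bound x M w cx HM.
have mg := gg_meas x cx.
have igg : mu.-integrable setT (EFin \o gg x) := bnd_integrable (gg x) M mg hg.
have icst : mu.-integrable [set: borel T] (EFin \o (fun _ : borel T => m)).
  exact: (bnd_integrable (fun _ => m) `|m|%R (measurable_cst _) (fun w => lexx _)).
have intm : \int[mu]_w m%:E = m%:E.
  rewrite integral_cst //=.
  have -> : mu setT = 1 by exact: probability_setT.
  by rewrite mule1.
set S := [set w : borel T | (m < gg x w)%R].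
have mS : measurable S.
  have := preim_meas (gg x) `]m, +oo[%classic mg (measurable_itv _).
  by congr measurable; apply: funext => w /=; rewrite in_itv /= andbT.
have iS : phi @^-1` S = S by apply: funext => w; rewrite /S /preimage /= gg_inv.
case: (proj2 hmu S mS iS) => hS.
- have -> : [set w | gg x w != m] = [set w | (m - gg x w)%R != 0%R].
    by apply: funext => w /=; rewrite subr_eq0 eq_sym.
  apply: (@ae0 (fun w => m - gg x w)%R (`|m| + M)%R
    (measurable_funB (measurable_cst _) mg)).
  + by move=> w; apply: le_trans (ler_normB _ _) _; rewrite lerD2l.
  + under eq_integral do rewrite EFinB.
    rewrite (integralB _ icst igg) //; transitivity (m%:E - m%:E); last exact: subee.
    by congr (_ - _); [exact: intm|exact: Ig].
  + by rewrite -hS; congr (mu _); apply: funext => w /=; rewrite subr_lt0.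
- have -> : [set w | gg x w != m] = [set w | (gg x w - m)%R != 0%R].
    by apply: funext => w /=; rewrite subr_eq0.
  apply: (@ae0 (fun w => gg x w - m)%R (M + `|m|)%R
    (measurable_funB mg (measurable_cst _))).
  + by move=> w; apply: le_trans (ler_normB _ _) _; rewrite lerD2r.
  + under eq_integral do rewrite EFinB.
    rewrite (integralB _ igg icst) //; transitivity (m%:E - m%:E); last exact: subee.
    by congr (_ - _); [exact: Ig|exact: intm].
  + apply: (subset_measure0 _ (measurableC mS)).
    * have := preim_meas (gg x) `]-oo, m[%classic mg (measurable_itv _).
      by congr measurable; apply: funext => w /=; rewrite in_itv /= subr_lt0.
    * by move=> w /= h1 h2; move: h1; rewrite subr_lt0 => h1; rewrite /S /= in h2; by move: (lt_trans h1 h2); rewrite ltxx.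
    * have h := probability_setC mu mS; rewrite hS subee // in h; exact: h.
Qed.


Lemma close_eq (a b : R) : (forall e, (0 < e)%R -> (`|a - b| <= e)%R) -> a = b.
Proof.
move=> h; have [d0|hd] := ltP 0%R (`|a - b|)%R; last first.
  by apply/eqP; rewrite -subr_eq0 -normr_le0.
have := h (`|a - b| / 2)%R (divr_gt0 d0 (ltr0Sn _ 1)); lra.
Qed.

Lemma int_close x y e : continuous x -> continuous y -> (forall t, (`|x t - y t| <= e)%R) ->
  (`|fine (\int[mu]_w (x w)%:E) - fine (\int[mu]_w (y w)%:E)| <= e)%R.
Proof.
move=> cx cy hxy.
have ix := cont_integrable hTc mu _ cx; have iy := cont_integrable hTc mu _ cy.
have cxy : continuous (fun t => x t - y t)%R by apply: contD => //; exact: contN.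
have ixy := cont_integrable hTc mu _ cxy.
have E : \int[mu]_w ((x w - y w)%R)%:E =
    (fine (\int[mu]_w (x w)%:E) - fine (\int[mu]_w (y w)%:E))%R%:E.
  under eq_integral do rewrite EFinB.
  rewrite (integralB _ ix iy) // EFinB !fineK //; exact: int_fin.
suff : `|\int[mu]_w ((x w - y w)%R)%:E| <= e%:E by rewrite E /= lee_fin.
apply: le_trans (le_abse_integral mu measurableT (measurable_int _ ixy)) _.
apply: (@le_trans _ _ (\int[mu]_w e%:E)).
  apply: ge0_le_integral => //.
  - by apply: measurableT_comp => //; exact: (measurable_int _ ixy).
  - by move=> w _ /=; rewrite lee_fin.
rewrite integral_cst //=.
have -> : mu setT = 1 by exact: probability_setT.
by rewrite mule1.
Qed.


Definition ycnt (n : nat) : T -> R :=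
  match @unpickle (seq ((nat * nat) * rat)) n with
  | Some i => yy hTc i | None => fun _ => 0%R end.

Definition mm (x : T -> R) : R := fine (\int[mu]_w (x w)%:E).

Lemma main_meas :
  let Om := [set w : borel T | forall x : T -> R, continuous x ->
        (gg x w)%:E = \int[mu]_t (x t)%:E] in
  measurable Om /\ mu Om = 1.
Proof.
move=> Om.
pose A n := [set w : borel T | continuous (ycnt n) -> gg (ycnt n) w = mm (ycnt n)].
have OmA : Om = \bigcap_n A n.
  apply/seteqP; split.
    move=> w Hw n _ cn; rewrite /mm -(Hw _ cn) //.
  move=> w HA x cx; rewrite -(fineK (int_fin _ cx)); congr EFin.
  apply: close_eq => e e0.
  have [i [cyi hxy]] := approx_cont hTc _ cx _ (divr_gt0 e0 (ltr0Sn _ 1)).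
  have yE : ycnt (pickle i) = yy hTc i by rewrite /ycnt pickleK.
  have : A (pickle i) w := HA (pickle i) I.
  rewrite /A /= yE => /(_ cyi) hy.
  have h1 := gg_close x (yy hTc i) (e / 2)%R w cx cyi hxy.
  have h2 := int_close x (yy hTc i) (e / 2)%R cx cyi hxy.
  rewrite /mm in hy.
  move: h1 h2; rewrite hy => h1 h2.
  have := ler_normD (gg x w - fine (\int[mu]_w (yy hTc i w)%:E))%R
     (fine (\int[mu]_w (yy hTc i w)%:E) - fine (\int[mu]_w (x w)%:E))%R.
  rewrite addrA subrK => h3.
  apply: le_trans h3 _.
  have := h2; rewrite distrC => h2'.
  have -> : e = (e / 2 + e / 2)%R by rewrite -splitr.
  exact: lerD.
have mOm : measurable Om.
  rewrite OmA; apply: bigcapT_measurable => n.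
  case: (pselect (continuous (ycnt n))) => cn.
    have -> : A n = gg (ycnt n) @^-1` [set mm (ycnt n)].
      apply: funext => w /=; apply: propext; split => [h|h _]; [exact: h|exact: h].
    by apply: preim_meas; [exact: gg_meas | exact: measurable_set1].
  have -> : A n = setT.
    by apply: funext => w /=; apply: propext; split => // _ /cn.
  exact: measurableT.
split => //.
pose B n := [set w : borel T | continuous (ycnt n) /\ gg (ycnt n) w != mm (ycnt n)].
have nB n : mu.-negligible (B n).
  case: (pselect (continuous (ycnt n))) => cn.
    exists [set w | gg (ycnt n) w != mm (ycnt n)]; split.
    - have := preim_meas (gg (ycnt n)) (~` [set mm (ycnt n)]) (gg_meas _ cn)
        (measurableC (measurable_set1 _)).
      congr measurable; apply: funext => w /=.
      by apply/propext; split; move/eqP.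
    - exact: ae_const.
    - by move=> w [].
  exists set0; split => //.
  by move=> w [].
have [N [mN muN subN]] := negligible_bigcup nB.
have sub : ~` N `<=` Om.
  rewrite OmA => w Nw n _ cn; apply/eqP; apply: contraT => hne.
  by exfalso; apply: Nw; apply: subN; exists n.
apply/eqP; rewrite eq_le; apply/andP; split.
  exact: probability_le1.
have h := probability_setC mu mN; rewrite muN sube0 in h.
rewrite -h; apply: le_measure => //; rewrite inE //.
  exact: measurableC.
Qed.

End Main.

Theorem corollary4p2 (R : realType) (T : pseudoPMetricType R)
  (hT2 : hausdorff_space T) (hTc : compact [set: T])
  (phi : T -> T) (hphi : continuous phi)
  (c : nat -> seq R) (hc : forall n, convex_coeffs (c n))
  (Q : @functional R T -> @functional R T)
  (hQX : forall mu, in_Xstar mu -> in_Xstar (Q mu))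
  (hQlin : forall (a : R) mu nu, in_Xstar mu -> in_Xstar nu ->
     Xstar_eq (Q (fun x => a * mu x + nu x)) (fun x => a * Q mu x + Q nu x))
  (hQ : forall mu (x : T -> R), in_Xstar mu -> continuous x ->
     (fun n => convVpow phi (c n) mu x) @ \oo --> Q mu x)
  (herg : forall mu (x : T -> R), in_Xstar mu -> continuous x ->
     (fun n => convVpow phi (c n) mu x - Vop phi (convVpow phi (c n) mu) x)
       @ \oo --> 0)
  (mu : probability (borel T) R) (hmu : ergodic_measure phi mu) :
  let Omega_mu := [set w : borel T |
      forall x : T -> R, continuous x ->
        ((Q (delta_fun w) x)%:E = \int[mu]_t (x t)%:E)%E] in
  measurable Omega_mu /\ mu Omega_mu = 1%E.
Proof.
exact (main_meas hTc phi hphi c hc Q hQ herg mu hmu).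
Qed.
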